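(* Let $p(z)=\sum_{j=0}^d a_j z^j$ be a complex polynomial of degree $d \geq 2$ and let $B$ be a closed convex subset of $\mathbb{C}$ containing all zeros of $p'$. Then the set $C_B$ of all $w \in \mathbb{C}$ such that all zeros of the polynomial $z \mapsto p(z)-w$ lie in $B$ is a convex set.
   Context: Convexity is with respect to the real vector space structure $\mathbb{C}\cong\mathbb{R}^2$. *)

(* Defs.v *)
From HB Require Import structures.
From mathcomp Require Import all_boot all_order all_algebra.
From mathcomp Require Import complex.
From mathcomp Require Import all_classical all_reals all_analysis.
Set Implicit Arguments. Unset Strict Implicit. Unset Printing Implicit Defensive.
Import Order.TTheory GRing.Theory Num.Theory.
Import numFieldNormedType.Exports.
Local Open Scope ring_scope.
Local Open Scope classical_set_scope.
Local Open Scope complex_scope.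

Definition cconvex (R : realType) (A : set R[i]) : Prop :=
  forall (a b : R[i]) (t : R), A a -> A b -> 0 <= t <= 1 ->
    A ((1 - t)%:C * a + t%:C * b).

Definition CB (R : realType) (p : {poly R[i]}) (B : set R[i]) : set R[i] :=
  [set w | forall z : R[i], root (p - w%:P) z -> B z].

(* Closedness in C ~ R^2 with the Euclidean (modulus) topology:
   every point outside A has a ball around it disjoint from A.
   (`|z - w| is the complex modulus, a real number embedded in R[i].) *)
Definition cclosed (R : realType) (A : set R[i]) : Prop :=
  forall w : R[i], ~ A w ->
    exists e : R, 0 < e /\ forall z : R[i], `|z - w| < e%:C -> ~ A z.

(* Main.v *)
Require Import Defs.
From HB Require Import structures.
From mathcomp Require Import all_boot all_order all_algebra.
From mathcomp Require Import complex.
From mathcomp Require Import ring lra.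
From mathcomp Require Import all_classical all_reals all_analysis.
Set Implicit Arguments. Unset Strict Implicit. Unset Printing Implicit Defensive.
Import Order.TTheory GRing.Theory Num.Theory.
Import numFieldNormedType.Exports.
Local Open Scope ring_scope.
Local Open Scope classical_set_scope.
Local Open Scope complex_scope.
Section NM.
Variable R : realType.
Local Notation C := R[i].

Definition nm (z : C) : R := Num.sqrt (complex.Re z ^+ 2 + complex.Im z ^+ 2).

Lemma nmE (z : C) : `|z| = (nm z)%:C.
Proof. by rewrite normc_def. Qed.

Lemma nm_ge0 z : 0 <= nm z.
Proof. exact: sqrtr_ge0. Qed.

Lemma nmD x y : nm (x + y) <= nm x + nm y.
Proof. by rewrite -lecR rmorphD /=; have := ler_normD x y; rewrite !nmE. Qed.

Lemma nmM x y : nm (x * y) = nm x * nm y.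
Proof. by apply: complexI; rewrite rmorphM /=; have := normrM x y; rewrite !nmE. Qed.

Lemma nmN x : nm (- x) = nm x.
Proof. by apply: complexI; have := normrN x; rewrite !nmE. Qed.

Lemma nmB x y : nm (x - y) = nm (y - x).
Proof. by rewrite -nmN opprB. Qed.

Lemma nmV x : nm (x^-1) = (nm x)^-1.
Proof. by apply: complexI; rewrite fmorphV /=; have := normfV x; rewrite !nmE. Qed.

Lemma nmX x n : nm (x ^+ n) = nm x ^+ n.
Proof. by apply: complexI; rewrite rmorphXn /=; have := normrX n x; rewrite !nmE. Qed.

Lemma nm0 : nm 0 = 0.
Proof. by apply: complexI; have := @normr0 _ C; rewrite !nmE. Qed.

Lemma nm_eq0 x : (nm x == 0) = (x == 0).
Proof. by have := normr_eq0 x; rewrite nmE => <-; rewrite eq_complex /= eqxx andbT. Qed.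

Lemma nmR (x : R) : nm x%:C = `|x|.
Proof. by rewrite /nm /= expr0n /= addr0 sqrtr_sqr. Qed.

Lemma Re_le_nm z : `|complex.Re z| <= nm z.
Proof.
rewrite /nm -sqrtr_sqr; apply: ler_wsqrtr.
by rewrite lerDl sqr_ge0.
Qed.

Lemma Im_le_nm z : `|complex.Im z| <= nm z.
Proof.
rewrite /nm -sqrtr_sqr; apply: ler_wsqrtr.
by rewrite lerDr sqr_ge0.
Qed.

Lemma nm_sum (I : Type) (s : seq I) (F : I -> C) :
  nm (\sum_(i <- s) F i) <= \sum_(i <- s) nm (F i).
Proof.
elim: s => [|a s IH]; first by rewrite !big_nil nm0.
rewrite !big_cons; apply: (le_trans (nmD _ _)); exact: lerD.
Qed.

Lemma nm_conj z : nm (z^*)%C = nm z.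
Proof. by case: z => a b; rewrite /nm /= sqrrN. Qed.

End NM.
Section Poly.
Variable R : realType.
Local Notation C := R[i].

Lemma logder (rs : seq C) (x : C) : x \notin rs ->
  (\prod_(z <- rs) ('X - z%:P))^`().[x] =
  (\prod_(z <- rs) ('X - z%:P)).[x] * \sum_(z <- rs) (x - z)^-1.
Proof.
elim: rs => [|a s IH]; first by rewrite !big_nil mulr0 -polyC1 derivC horner0.
rewrite in_cons negb_or => /andP[xa xs].
rewrite !big_cons derivM derivXsubC mul1r hornerD !hornerM hornerXsubC IH //.
have xa0 : x - a != 0 by rewrite subr_eq0.
set P := (\prod_(_ <- s) _).[x]; set S := \sum_(_ <- s) _.
rewrite [RHS]mulrDr mulrAC divff // mul1r; ring.
Qed.

Lemma nm_prod (I : Type) (s : seq I) (F : I -> C) :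
  nm (\prod_(i <- s) F i) = \prod_(i <- s) nm (F i).
Proof.
elim: s => [|a s IH]; first by rewrite !big_nil /nm /= expr0n /= addr0 expr1n sqrtr1.
by rewrite !big_cons nmM IH.
Qed.

Lemma newton (a : C) (rs : seq C) (x : C) (r : R) : 0 < r ->
  (forall z, z \in rs -> r < nm (x - z)) ->
  nm ((a *: \prod_(z <- rs) ('X - z%:P))^`().[x]) * r <=
  (size rs)%:R * nm ((a *: \prod_(z <- rs) ('X - z%:P)).[x]).
Proof.
move=> r0 H.
have xrs : x \notin rs.
  by apply/negP => /H; rewrite subrr nm0 ltNge ltW.
rewrite derivZ !hornerZ logder // mulrA nmM -mulrA [_ * nm (a * _)]mulrC.
apply: ler_wpM2l; first exact: nm_ge0.
apply: (le_trans (ler_wpM2r (ltW r0) (@nm_sum R _ rs (fun z => (x - z)^-1)))).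
elim: rs H xrs => [|b s IH] H xrs; first by rewrite big_nil mul0r.
rewrite big_cons mulrDl /= -add1n natrD; apply: lerD; last first.
  apply: IH => [z zs|]; first by apply: H; rewrite in_cons zs orbT.
  by move: xrs; rewrite in_cons negb_or => /andP[].
have hb := H b (mem_head _ _).
have nb0 : 0 < nm (x - b) by apply: lt_trans hb.
rewrite nmV ler_pdivrMl // mulr1; exact: ltW.
Qed.

Lemma holder (a : C) (rs : seq C) (x : C) (r : R) : 0 <= r ->
  (forall z, z \in rs -> r < nm (x - z)) ->
  r ^+ size rs * nm a <= nm ((a *: \prod_(z <- rs) ('X - z%:P)).[x]).
Proof.
move=> r0 H; rewrite hornerZ nmM mulrC; apply: ler_wpM2l; first exact: nm_ge0.
rewrite horner_prod nm_prod.
elim: rs H => [|b s IH] H; first by rewrite big_nil expr0.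
rewrite big_cons /= exprS hornerXsubC; apply: ler_pM => //.
- exact: exprn_ge0.
- by apply: ltW; apply: H; exact: mem_head.
- by apply: IH => z zs; apply: H; rewrite in_cons zs orbT.
Qed.

End Poly.
Section Taylor.
Variable R : realType.
Local Notation C := R[i].

Definition Kc (P : {poly C}) : R := \sum_(i < size P) nm P`_i.

Lemma Kc_ge0 P : 0 <= Kc P.
Proof. by apply: sumr_ge0 => i _; exact: nm_ge0. Qed.

Lemma horner_bound (P : {poly C}) (h : C) : nm h <= 1 -> nm P.[h] <= Kc P.
Proof.
move=> h1; rewrite horner_coef /Kc.
apply: le_trans; first exact: nm_sum.
apply: ler_sum => i _.
rewrite nmM nmX; apply: ler_piMr; first exact: nm_ge0.
by apply: exprn_ile1 => //; exact: nm_ge0.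
Qed.

Lemma take_drop_horner (P : {poly C}) k h :
  P.[h] = \sum_(i < k) P`_i * h ^+ i + (drop_poly k P).[h] * h ^+ k.
Proof.
by rewrite -{1}(poly_take_drop k P) hornerD hornerM hornerXn /take_poly horner_poly.
Qed.

Lemma tail1 (P : {poly C}) h : nm h <= 1 ->
  nm (P.[h] - P`_0) <= Kc (drop_poly 1 P) * nm h.
Proof.
move=> h1; rewrite (take_drop_horner P 1 h) big_ord1 expr0 mulr1 addrAC subrr add0r.
rewrite nmM expr1; apply: ler_wpM2r; [exact: nm_ge0 | exact: horner_bound].
Qed.

Lemma tail3 (P : {poly C}) h : nm h <= 1 ->
  nm (P.[h] - P`_0 - P`_1 * h - P`_2 * h ^+ 2) <= Kc (drop_poly 3 P) * nm h ^+ 3.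
Proof.
move=> h1; rewrite (take_drop_horner P 3 h) !big_ord_recr big_ord0 /= expr0 mulr1 expr1.
have -> : 0 + P`_0 + P`_1 * h + P`_2 * h ^+ 2 + (drop_poly 3 P).[h] * h ^+ 3 - P`_0 -
  P`_1 * h - P`_2 * h ^+ 2 = (drop_poly 3 P).[h] * h ^+ 3 by ring.
rewrite nmM nmX; apply: ler_wpM2r; [exact: exprn_ge0 (nm_ge0 _) | exact: horner_bound].
Qed.

End Taylor.
Section Local.
Variable R : realType.
Local Notation C := R[i].

Lemma Re_inv_neg (z : C) : complex.Re z < 0 -> 0 < complex.Re ((- z)^-1).
Proof. case: z => x y /= hx; apply: divr_gt0; nra. Qed.

Lemma size_deriv_gt1 (P : {poly C}) : (2 < size P)%N -> (1 < size (P^`())%R)%N.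
Proof.
move=> hP; rewrite ltnNge; apply/negP => /leq_sizeP H.
have lc : P`_(size P).-1 != 0.
  by rewrite -lead_coefE lead_coef_eq0 -size_poly_gt0; case: (size P) hP.
move: hP lc H; case: (size P) => [|[|[|m]]] // _ lc H.
have := H m.+1 isT; rewrite coef_deriv => /eqP; rewrite mulrn_eq0 /=.
by rewrite (negPf lc).
Qed.

Lemma sizeB_const (P : {poly C}) (k : C) : (1 < size P)%N -> size (P - k%:P) = size P.
Proof.
move=> hP; rewrite size_polyDl // size_polyN; apply: leq_ltn_trans hP.
exact: size_polyC_leq1.
Qed.

End Local.
Section Approx.
Variable R : realType.
Local Notation C := R[i].

Lemma approx (Q : {poly C}) (beta kap : C) :
  Q`_0 = 0 -> Q`_1 != 0 -> Q`_2 = Q`_1 * beta -> (1 < size Q)%N ->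
  exists e0 k3 : R, 0 < e0 /\ 0 <= k3 /\ forall eps : R, 0 < `|eps| -> `|eps| <= e0 ->
   exists rho, Q.[rho] = eps%:C * (Q`_1 * kap) /\
     nm (eps%:C * kap - beta * (eps%:C * kap) ^+ 2 - rho) <= k3 * `|eps| ^+ 3.
Proof.
move=> Q0 a0 Q2 sQ.
set a := Q`_1 in a0 Q2 *.
set A := nm a.
have A0 : 0 < A by rewrite lt_def nm_eq0 a0 nm_ge0.
set nk := nm kap; set B := nm beta.
have nk0 : 0 <= nk by exact: nm_ge0.
have B0 : 0 <= B by exact: nm_ge0.
set k1 := nk + B * nk ^+ 2.
have k10 : 0 <= k1 by rewrite /k1; nra.
set K3 := Kc (drop_poly 3 Q); set K1 := Kc (drop_poly 1 Q^`()).
have K30 : 0 <= K3 by exact: Kc_ge0.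
have K10 : 0 <= K1 by exact: Kc_ge0.
set k2 := A * B * (2 * B * nk ^+ 3 + B ^+ 2 * nk ^+ 4) + K3 * k1 ^+ 3.
have k20 : 0 <= k2.
  rewrite /k2; apply: addr_ge0; last by apply: mulr_ge0 => //; exact: exprn_ge0.
  apply: mulr_ge0; first by apply: mulr_ge0 => //; exact: ltW.
  apply: addr_ge0; apply: mulr_ge0; try exact: exprn_ge0.
  by apply: mulr_ge0 => //; lra.
set m := (size Q).-1.
have m1 : (1 <= m%:R :> R) by rewrite ler1n /m; case: (size Q) sQ => [|[|]].
exists (Num.min (1 / (k1 + 1)) (A / (2 * (K1 * k1 + 1)))), (4 * m%:R * (k2 + 1) / A).
split; last split.
  rewrite lt_min; apply/andP; split; apply: divr_gt0 => //; try lra.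
  by apply: mulr_gt0; [lra | nra].
  apply: divr_ge0; last exact: ltW.
  apply: mulr_ge0; last lra.
  apply: mulr_ge0; lra.
move=> eps ep0; rewrite le_min => /andP[ele1 ele2].
set e := `|eps| in ep0 ele1 ele2 *.
have ek1 : e * (k1 + 1) <= 1 by move: ele1; rewrite ler_pdivlMr; lra.
have e1 : e <= 1 by nra.
have eK : e * (K1 * k1 + 1) <= A / 2.
  by move: ele2; rewrite ler_pdivlMr; [|nra]; move=> H; rewrite ler_pdivlMr; nra.
set u := eps%:C * kap.
have nu : nm u = e * nk by rewrite /u nmM nmR.
set h := u - beta * u ^+ 2.
have nh : nm h <= e * k1.
  apply: (le_trans (nmD _ _)); rewrite nmN nmM nmX nu /k1.
  have : e ^+ 2 <= e by rewrite expr2; nra.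
  move=> ee; rewrite exprMn.
  have Bn : 0 <= B * nk ^+ 2 by apply: mulr_ge0 => //; exact: exprn_ge0.
  have := ler_wpM2r Bn ee => H.
  have -> : B * (e ^+ 2 * nk ^+ 2) = e ^+ 2 * (B * nk ^+ 2) by ring.
  rewrite mulrDr; lra.
have nh1 : nm h <= 1.
  apply: (le_trans nh); nra.
have ident : Q.[h] - eps%:C * (a * kap) =
    a * beta * (beta ^+ 2 * u ^+ 4 - (beta * u ^+ 3 + beta * u ^+ 3)) +
    (Q.[h] - Q`_0 - Q`_1 * h - Q`_2 * h ^+ 2).
  rewrite Q0 Q2 /h /u /a; ring.
have nQ : nm (Q.[h] - eps%:C * (a * kap)) <= k2 * e ^+ 3.
  rewrite ident; apply: (le_trans (nmD _ _)).
  have T := tail3 Q nh1; rewrite -/a -/K3 in T.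
  have h3 : nm h ^+ 3 <= (e * k1) ^+ 3.
    by apply: lerXn2r; [rewrite nnegrE; exact: nm_ge0 | rewrite nnegrE; nra | exact: nh].
  have T' : nm (Q.[h] - Q`_0 - a * h - Q`_2 * h ^+ 2) <= K3 * (e * k1) ^+ 3.
    by apply: (le_trans T); apply: ler_wpM2l.
  have M1 : nm (a * beta * (beta ^+ 2 * u ^+ 4 - (beta * u ^+ 3 + beta * u ^+ 3)))
      <= A * B * (B ^+ 2 * (e * nk) ^+ 4 + (B * (e * nk) ^+ 3 + B * (e * nk) ^+ 3)).
    rewrite !nmM; apply: ler_wpM2l; first exact: mulr_ge0 (ltW A0) B0.
    apply: (le_trans (nmD _ _)); rewrite nmN nmM !nmX nu; apply: lerD => //.
    have b3 : nm (beta * u ^+ 3) = B * (e * nk) ^+ 3 by rewrite nmM nmX nu.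
    by apply: (le_trans (nmD _ _)); rewrite b3.
  have e43 : e ^+ 4 <= e ^+ 3.
    have H3 : 0 <= e ^+ 3 by exact: exprn_ge0 (normr_ge0 _).
    rewrite exprS; nra.
  apply: le_trans; first exact: lerD M1 T'.
  rewrite /k2 !exprMn.
  have p3 : 0 <= e ^+ 3 by exact: exprn_ge0 (normr_ge0 _).
  have q3 : 0 <= nk ^+ 3 by exact: exprn_ge0.
  have q4 : 0 <= nk ^+ 4 by exact: exprn_ge0.
  have b2 : 0 <= B ^+ 2 by exact: exprn_ge0.
  have c3 : 0 <= k1 ^+ 3 by exact: exprn_ge0.
  have X1 : B ^+ 2 * (e ^+ 4 * nk ^+ 4) <= B ^+ 2 * (e ^+ 3 * nk ^+ 4).
    by apply: ler_wpM2l => //; apply: ler_wpM2r.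
  have AB : 0 <= A * B by apply: mulr_ge0 => //; lra.
  set E3 := e ^+ 3 in p3 e43 X1 *.
  set E4 := e ^+ 4 in e43 X1 *.
  set N3 := nk ^+ 3 in q3 *. set N4 := nk ^+ 4 in q4 X1 *.
  set B2 := B ^+ 2 in b2 X1 *. set L3 := k1 ^+ 3 in c3 *.
  nra.
have nQ' : A / 2 <= nm (Q^`().[h]).
  have T := tail1 (Q^`()) nh1; rewrite -/K1 coef_deriv mulr1n -/a in T.
  have H1 : nm (Q^`().[h] - a) <= A / 2 by apply: (le_trans T); nra.
  have H2 : A <= nm (Q^`().[h]) + nm (a - Q^`().[h]).
    by rewrite /A; have := nmD (Q^`().[h]) (a - Q^`().[h]); rewrite addrC subrK.
  rewrite nmB in H2; lra.
have [rs Hrs] := closed_field_poly_normal (Q - (eps%:C * (a * kap))%:P).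
set Qe := Q - _ in Hrs.
have sQe : size Qe = size Q by exact: sizeB_const.
have lc0 : lead_coef Qe != 0.
  by rewrite lead_coef_eq0 -size_poly_gt0 sQe; case: (size Q) sQ.
have srs : size rs = m.
  have := sQe; rewrite Hrs size_scale // size_prod_XsubC /m => <-; done.
have dQe : (Qe^`())%R = (Q^`())%R by rewrite /Qe derivB derivC subr0.
have hQe : Qe.[h] = Q.[h] - eps%:C * (a * kap) by rewrite /Qe hornerD hornerN hornerC.
set r := 4 * m%:R * (k2 + 1) / A * e ^+ 3.
have e30 : 0 < e ^+ 3 by exact: exprn_gt0.
have r0 : 0 < r.
  rewrite /r; apply: mulr_gt0 => //; apply: divr_gt0 => //; nra.
have [rho rhoin rhoclose] : exists2 rho, rho \in rs & nm (h - rho) <= r.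
  case: (boolP (has (fun z => nm (h - z) <= r) rs)) => [/hasP[z zin zc]|/hasPn H].
    by exists z.
  exfalso.
  have H' : forall z, z \in rs -> r < nm (h - z) by move=> z /H; rewrite -ltNge.
  have N := @newton R (lead_coef Qe) rs h r r0 H'.
  rewrite -Hrs dQe hQe srs in N.
  have N2 : A / 2 * r <= m%:R * (k2 * e ^+ 3).
    apply: le_trans; first by apply: ler_wpM2r; [exact: ltW | exact: nQ'].
    apply: (le_trans N); apply: ler_wpM2l => //; lra.
  have Ar : A / 2 * r = 2 * m%:R * (k2 + 1) * e ^+ 3.
    by rewrite /r; field; exact: lt0r_neq0.
  rewrite Ar in N2.
  have X : m%:R * (k2 * e ^+ 3) < 2 * m%:R * (k2 + 1) * e ^+ 3 by nra.
  by move: X; rewrite ltNge N2.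
exists rho; split.
  have : root Qe rho by rewrite Hrs rootZ // root_prod_XsubC.
  by move/rootP/eqP; rewrite /Qe hornerD hornerN hornerC subr_eq0 => /eqP.
by rewrite /r -mulrA in rhoclose *.
Qed.

End Approx.
Section Local2.
Variable R : realType.
Local Notation C := R[i].

Lemma ReD (x y : C) : complex.Re (x + y) = complex.Re x + complex.Re y.
Proof. by case: x; case: y. Qed.
Lemma ReN (x : C) : complex.Re (- x) = - complex.Re x.
Proof. by case: x. Qed.
Lemma ReB (x y : C) : complex.Re (x - y) = complex.Re x - complex.Re y.
Proof. by rewrite ReD ReN. Qed.
Lemma Re_sum (s : seq C) (F : C -> C) :
  complex.Re (\sum_(z <- s) F z) = \sum_(z <- s) complex.Re (F z).
Proof.
elim: s => [|a s IH]; first by rewrite !big_nil.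
by rewrite !big_cons ReD IH.
Qed.
Lemma ReMR (z : C) (r : R) : complex.Re (z * r%:C) = complex.Re z * r.
Proof. case: z => a b /=; ring. Qed.
Lemma ReRM (z : C) (r : R) : complex.Re (r%:C * z) = r * complex.Re z.
Proof. by rewrite mulrC ReMR mulrC. Qed.
Lemma Re_le_nm' (z : C) : complex.Re z <= nm z.
Proof. exact: le_trans (ler_norm _) (Re_le_nm _). Qed.
Lemma Re_close (x y : C) : complex.Re x - nm (x - y) <= complex.Re y.
Proof. have := Re_le_nm' (x - y); rewrite ReB; lra. Qed.

Lemma Re_case0 (t y : R) (b : C) :
  complex.Re (t%:C * (0 +i* y) - b * (t%:C * (0 +i* y)) ^+ 2) = t ^+ 2 * y ^+ 2 * complex.Re b.
Proof. case: b => p q; rewrite !expr2 /=; ring. Qed.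

Lemma local (Q : {poly C}) (c : C) (delta : R) :
  Q`_0 = 0 -> (2 < size Q)%N ->
  (forall r, root (Q^`())%R r -> complex.Re r < 0) -> c != 0 -> 0 < delta ->
  exists eps : R, exists rho : C,
    `|eps| < delta /\ Q.[rho] = eps%:C * c /\ 0 < complex.Re rho.
Proof.
move=> Q0 sQ HQ c0 d0.
set a := Q`_1.
have Q'0 : (Q^`())%R.[0] = a by rewrite horner_coef0 coef_deriv mulr1n.
have a0 : a != 0.
  apply/negP => /eqP a0; have := HQ 0; rewrite /root Q'0 a0 eqxx => /(_ isT).
  by rewrite ltxx.
have [cs Hcs] := closed_field_poly_normal (Q^`())%R.
set lc := lead_coef _ in Hcs.
have sQ' := size_deriv_gt1 sQ.
have lc0 : lc != 0 by rewrite lead_coef_eq0 -size_poly_gt0; case: (size _) sQ'.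
have csn : cs != [::].
  apply/negP => /eqP cs0; move: sQ'; rewrite Hcs cs0 big_nil size_scale //.
  by rewrite size_poly1.
have csneg : forall z, z \in cs -> complex.Re z < 0.
  by move=> z zin; apply: HQ; rewrite Hcs rootZ // root_prod_XsubC.
have n0 : 0 \notin cs.
  by apply/negP => /csneg; rewrite ltxx.
set S := \sum_(z <- cs) (0 - z)^-1.
have Q''0 : Q`_2 *+ 2 = a * S.
  have E1 : ((Q^`())%R^`())%R.[0] = Q`_2 *+ 2.
    by rewrite horner_coef0 !coef_deriv mulr1n.
  rewrite -E1 {1}Hcs derivZ hornerZ logder // -Q'0 Hcs hornerZ /S; ring.
set beta := S * (1 / 2)%:C.
have Q2 : Q`_2 = a * beta.
  have h2 : (2%:R : C) * (1 / 2)%:C = 1.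
    by rewrite -(rmorph_nat (real_complex R)) -rmorphM /= mul1r divff ?pnatr_eq0.
  by rewrite /beta mulrA -Q''0 -[Q`_2 *+ 2]mulr_natr -mulrA h2 mulr1.
have Rbeta : 0 < complex.Re beta.
  rewrite /beta ReMR; apply: mulr_gt0; last by lra.
  rewrite /S Re_sum; case: cs csn csneg {Hcs n0 S Q''0 beta Q2} => // z s _ H.
  rewrite big_cons; apply: ltr_pwDl.
    by rewrite sub0r; apply: Re_inv_neg; apply: H; exact: mem_head.
  rewrite big_seq; apply: sumr_ge0 => w win; rewrite sub0r; apply: ltW; apply: Re_inv_neg.
  by apply: H; rewrite in_cons win orbT.
have sQ1 : (1 < size Q)%N by apply: ltn_trans sQ.
have [e0 [k3 [e00 [k30 Happ]]]] := @approx R Q beta (c / a) Q0 a0 Q2 sQ1.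
have ck : a * (c / a) = c by rewrite mulrC divfK.
set kap := c / a in ck Happ.
have k0 : kap != 0 by rewrite /kap mulf_neq0 ?invr_eq0.
have key : forall eps, 0 < `|eps| -> `|eps| <= e0 -> `|eps| < delta ->
    k3 * `|eps| ^+ 3 < complex.Re (eps%:C * kap - beta * (eps%:C * kap) ^+ 2) ->
    exists eps : R, exists rho : C,
    `|eps| < delta /\ Q.[rho] = eps%:C * c /\ 0 < complex.Re rho.
  move=> eps ep0 ep1 ep2 ep3.
  have [rho [Hr1 Hr2]] := Happ eps ep0 ep1.
  exists eps, rho; split => //; split; first by rewrite -ck.
  have := Re_close (eps%:C * kap - beta * (eps%:C * kap) ^+ 2) rho; lra.
clearbody kap.
set B := nm beta.
have B0 : 0 <= B by exact: nm_ge0.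
clear Happ ck; move: key k0; case: kap => x y key k0.
set nk := nm (x +i* y).
have nk0 : 0 <= nk by exact: nm_ge0.
have [x0|x0] := eqVneq x 0.
-
  rewrite {}x0 in key k0 *.
  have y0 : y != 0 by apply: contraNneq k0 => ->.
  have yb : 0 < y ^+ 2 * complex.Re beta by apply: mulr_gt0 => //; rewrite exprn_even_gt0.
  set eta := Num.min (Num.min e0 (delta / 2)) (Num.min 1 (y ^+ 2 * complex.Re beta / (k3 + 1))).
  have eta0 : 0 < eta.
    rewrite /eta !lt_min e00 /= divr_gt0 //= ?ltr01 ?divr_gt0 //; lra.
  have h1 : eta <= e0 by rewrite /eta !ge_min lexx ?orbT.
  have h2 : eta <= delta / 2 by rewrite /eta !ge_min lexx ?orbT.
  have h3 : eta <= 1 by rewrite /eta !ge_min lexx ?orbT.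
  have h4 : eta <= y ^+ 2 * complex.Re beta / (k3 + 1) by rewrite /eta !ge_min lexx ?orbT.
  have etan : `|eta| = eta by rewrite ger0_norm // ltW.
  apply: (key eta); rewrite ?etan //; first lra.
  rewrite Re_case0.
  move: h4; rewrite ler_pdivlMr; last lra.
  move=> h4.
  have e2 : 0 < eta ^+ 2 by exact: exprn_gt0.
  set Y := y ^+ 2 * complex.Re beta in yb h4 *.
  have -> : eta ^+ 2 * y ^+ 2 * complex.Re beta = eta ^+ 2 * Y by rewrite /Y; ring.
  have -> : k3 * eta ^+ 3 = eta ^+ 2 * (k3 * eta) by rewrite exprS; ring.
  by rewrite ltr_pM2l //; nra.
-
  have ax : 0 < `|x| by rewrite normr_gt0.
  set D := B * nk ^+ 2 + k3 + 1.
  have D0 : 0 < D by rewrite /D; have := exprn_ge0 2 nk0; nra.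
  set eta := Num.min (Num.min e0 (delta / 2)) (Num.min 1 (`|x| / D)).
  have eta0 : 0 < eta.
    rewrite /eta !lt_min e00 /= divr_gt0 //= ?ltr01 ?divr_gt0 //; lra.
  have h1 : eta <= e0 by rewrite /eta !ge_min lexx ?orbT.
  have h2 : eta <= delta / 2 by rewrite /eta !ge_min lexx ?orbT.
  have h3 : eta <= 1 by rewrite /eta !ge_min lexx ?orbT.
  have h4 : eta <= `|x| / D by rewrite /eta !ge_min lexx ?orbT.
  set eps := if 0 < x then eta else - eta.
  have epsn : `|eps| = eta.
    by rewrite /eps; case: ifP => _; rewrite ?normrN ger0_norm // ltW.
  have epsx : eps * x = eta * `|x|.
    rewrite /eps; case: ifP => hx.
      by rewrite gtr0_norm.
    rewrite ler0_norm ?mulrN ?mulNr //; rewrite leNgt hx //.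
  apply: (key eps); rewrite ?epsn //; first lra.
  rewrite ReB ReRM /=.
  have nb : complex.Re (beta * (eps%:C * (x +i* y)) ^+ 2) <= B * (eta ^+ 2 * nk ^+ 2).
    apply: le_trans; first exact: Re_le_nm'.
    by rewrite nmM nmX nmM nmR epsn exprMn.
  move: h4; rewrite ler_pdivlMr // => h4.
  have k3e : k3 * eta ^+ 3 <= k3 * eta ^+ 2.
    apply: ler_wpM2l => //; rewrite exprS; have := exprn_ge0 2 (ltW eta0); nra.
  have e2 : 0 < eta ^+ 2 by exact: exprn_gt0.
  rewrite epsx.
  have : eta ^+ 2 * (B * nk ^+ 2 + k3) < eta * `|x|.
    rewrite /D in h4.
    have := ler_wpM2l (ltW eta0) h4; rewrite expr2; nra.
  nra.
Qed.

End Local2.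
Section Sep.
Variable R : realType.
Local Notation C := R[i].

Lemma ImD (x y : C) : complex.Im (x + y) = complex.Im x + complex.Im y.
Proof. by case: x; case: y. Qed.
Lemma ImN (x : C) : complex.Im (- x) = - complex.Im x.
Proof. by case: x. Qed.
Lemma ImRM (z : C) (r : R) : complex.Im (r%:C * z) = r * complex.Im z.
Proof. case: z => a b /=; ring. Qed.

Lemma sq_comb (s : R) (a b z : C) :
  complex.Re (z - ((1 - s)%:C * a + s%:C * b)) =
    complex.Re z - ((1 - s) * complex.Re a + s * complex.Re b) /\
  complex.Im (z - ((1 - s)%:C * a + s%:C * b)) =
    complex.Im z - ((1 - s) * complex.Im a + s * complex.Im b).
Proof. by case: a => a1 a2; case: b => b1 b2; case: z => z1 z2 /=; split; ring. Qed.

Definition sq (w : C) : R := complex.Re w ^+ 2 + complex.Im w ^+ 2.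
Definition ip (u w : C) : R := complex.Re u * complex.Re w + complex.Im u * complex.Im w.

Lemma sq_ge0 w : 0 <= sq w.
Proof. by rewrite /sq addr_ge0 ?sqr_ge0. Qed.

Lemma nm_sq w : nm w ^+ 2 = sq w.
Proof. by rewrite /nm sqr_sqrtr // sq_ge0. Qed.

Lemma separate (B : set C) (F : seq C) (z : C) :
  cclosed B -> cconvex B -> (forall f, f \in F -> B f) -> F != [::] -> ~ B z ->
  exists v : C, forall f, f \in F -> ip v f < ip v z.
Proof.
move=> Bcl Bcv FB Fn nBz.
have [e [e0 He]] := Bcl z nBz.
have Be : forall b, B b -> e ^+ 2 <= sq (z - b).
  move=> b Bb.
  have enm : e <= nm (b - z).
    rewrite leNgt; apply/negP => hb; apply: (He b) => //.
    by rewrite nmE ltcR.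
  rewrite -nm_sq nmB; apply: lerXn2r; [rewrite nnegrE; exact: ltW | rewrite nnegrE; exact: nm_ge0 | exact: enm].
set S := [set r | exists2 b, B b & r = sq (z - b)].
have [f0 f0in] : exists f0, f0 \in F by move: FB; case: F Fn => // f s _ _; exists f; exact: mem_head.
have Sn : S !=set0 by exists (sq (z - f0)); exists f0 => //; exact: FB.
have Slb : lbound S (e ^+ 2) by move=> r [b Bb ->]; exact: Be.
have Shl : has_lbound S by exists (e ^+ 2).
set D := inf S.
have De : e ^+ 2 <= D by exact: lb_le_inf.
set G := 2 * \sum_(f <- F) sq (f - z) + 2 * (D + 1).
have e20 : 0 < e ^+ 2 by exact: exprn_gt0.
have G0 : 0 <= G.
  rewrite /G; apply: addr_ge0; apply: mulr_ge0 => //.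
    by apply: sumr_ge0 => f _; exact: sq_ge0.
  lra.
set eta := Num.min 1 (e ^+ 4 / (G + e ^+ 2)).
have eta0 : 0 < eta.
  rewrite /eta lt_min ltr01 /=; apply: divr_gt0; [exact: exprn_gt0 | lra].
have eta1 : eta <= 1 by rewrite /eta ge_min lexx.
have eta2 : eta <= e ^+ 4 / (G + e ^+ 2) by rewrite /eta ge_min lexx orbT.
have [r [b0 Bb0 ->] rlt] := inf_lt Sn (ltr_pwDr eta0 (lexx D)).
exists (z - b0) => f fin.
rewrite ltNge; apply/negP => Hip.
set s := e ^+ 2 / (G + e ^+ 2).
have s0 : 0 <= s by apply: divr_ge0; lra.
have s1 : s <= 1 by rewrite ler_pdivrMr; lra.
have s01 : 0 <= s <= 1 by rewrite s0 s1.
have Bs := Bcv b0 f s Bb0 (FB f fin) s01.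
have Ds : D <= sq (z - ((1 - s)%:C * b0 + s%:C * f)).
  by apply: (ge_inf Shl); exists ((1 - s)%:C * b0 + s%:C * f).
have fz : sq (f - z) <= \sum_(f <- F) sq (f - z).
  rewrite (big_rem f) //= lerDl; apply: sumr_ge0 => w _; exact: sq_ge0.
have sqe := Be b0 Bb0.
move: Ds rlt Hip sqe fz.
have [c1 c2] := sq_comb s b0 f z.
rewrite /sq c1 c2 /ip !ReD !ImD !ReN !ImN.
set z1 := complex.Re z; set z2 := complex.Im z.
set b1 := complex.Re b0; set b2 := complex.Im b0.
set f1 := complex.Re f; set f2 := complex.Im f.
move=> Ds rlt Hip sqe fz.
set P := (z1 - b1) ^+ 2 + (z2 - b2) ^+ 2 in rlt sqe.
set I := (z1 - b1) * (f1 - b1) + (z2 - b2) * (f2 - b2).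
set Gg := (f1 - b1) ^+ 2 + (f2 - b2) ^+ 2.
have HI : P <= I by rewrite /P /I; rewrite !expr2; lra.
have Hds : D <= P - 2 * s * I + s ^+ 2 * Gg.
  apply: (le_trans Ds); rewrite le_eqVlt; apply/orP; left; apply/eqP; rewrite /P /I /Gg; ring.
have HG : Gg <= G.
  have sfb : Gg <= 2 * ((f1 - z1) ^+ 2 + (f2 - z2) ^+ 2) + 2 * P.
    rewrite /Gg /P; have := sqr_ge0 (f1 - z1 + (z1 - b1)); have := sqr_ge0 (f2 - z2 + (z2 - b2)).
    have := sqr_ge0 (f1 - z1 - (z1 - b1)); have := sqr_ge0 (f2 - z2 - (z2 - b2)).
    rewrite !expr2; lra.
  rewrite /G; lra.
have sG : s * (G + e ^+ 2) = e ^+ 2 by rewrite /s divfK //; lra.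
have s2G : s ^+ 2 * Gg <= s * e ^+ 2.
  have : s ^+ 2 * Gg <= s ^+ 2 * G by apply: ler_wpM2l => //; exact: exprn_ge0.
  rewrite expr2; nra.
have etas : eta <= s * e ^+ 2.
  have -> : s * e ^+ 2 = e ^+ 4 / (G + e ^+ 2).
    by rewrite /s; field; apply: lt0r_neq0; lra.
  exact: eta2.
nra.
Qed.

End Sep.
Section Main.
Variable R : realType.
Local Notation C := R[i].

Lemma cont_eps (f : R -> R) : (forall x eps, 0 < eps -> exists2 d, 0 < d &
  forall y, `|x - y| < d -> `|f x - f y| < eps) -> continuous f.
Proof.
move=> H x; apply/cvgrPdist_lt => eps e0.
have [d d0 Hd] := H x eps e0.
by apply/nbhs_ballP; exists d.
Qed.

Definition lmax (f : C -> R) (s : seq C) : R :=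
  foldr (fun x (m : R) => Num.max (f x) m) (f (head 0 s)) s.

Lemma lmax_ub_aux (f : C -> R) (s : seq C) (x0 : R) (x : C) : x \in s ->
  f x <= foldr (fun x (m : R) => Num.max (f x) m) x0 s.
Proof.
elim: s => // a s IH; rewrite in_cons => /orP[/eqP->|xs] /=.
  by rewrite le_max lexx.
by rewrite le_max IH ?orbT.
Qed.

Lemma lmax_ub (f : C -> R) (s : seq C) (x : C) : x \in s -> f x <= lmax f s.
Proof. exact: lmax_ub_aux. Qed.

Lemma lmax_in_aux (f : C -> R) (s : seq C) (x0 : C) : exists2 x, x \in x0 :: s &
  foldr (fun x (m : R) => Num.max (f x) m) (f x0) s = f x.
Proof.
elim: s => [|a s [x xin IH]] /=; first by exists x0; rewrite ?mem_head.
rewrite IH; case: (leP (f a) (f x)) => h.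
  by exists x => //; move: xin; rewrite !in_cons => /orP[->|->]; rewrite ?orbT.
by exists a; rewrite ?in_cons ?eqxx ?orbT.
Qed.

Lemma lmax_in (f : C -> R) (s : seq C) : s != [::] -> exists2 x, x \in s & lmax f s = f x.
Proof.
case: s => // a s _; rewrite /lmax /=.
have [x xin H] := lmax_in_aux f (a :: s) a.
exists x => //; move: xin; rewrite in_cons => /orP[/eqP->|//]; exact: mem_head.
Qed.

Lemma ipD (v x y : C) : ip v (x + y) = ip v x + ip v y.
Proof. by rewrite /ip ReD ImD; ring. Qed.
Lemma ipB (v x y : C) : ip v (x - y) = ip v x - ip v y.
Proof. by rewrite /ip ReD ImD ReN ImN; ring. Qed.
Lemma ip_le (v w : C) : ip v w <= nm v * nm w.
Proof.
have -> : ip v w = complex.Re ((v^*)%C * w) by case: v; case: w => /= *; rewrite /ip /=; ring.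
by apply: le_trans (Re_le_nm' _) _; rewrite nmM nm_conj.
Qed.
Lemma ip_shift (v x r : C) : ip v (x + v * r) = ip v x + sq v * complex.Re r.
Proof. by case: v => v1 v2; case: x => x1 x2; case: r => r1 r2; rewrite /ip /sq /=; ring. Qed.
Lemma sq_gt0 (v : C) : v != 0 -> 0 < sq v.
Proof. by move=> v0; rewrite -nm_sq exprn_gt0 // lt_def nm_eq0 v0 nm_ge0. Qed.

Lemma factor_root (P : {poly C}) (rs : seq C) x : P != 0 ->
  P = lead_coef P *: \prod_(z <- rs) ('X - z%:P) -> root P x = (x \in rs).
Proof. by move=> P0 HP; rewrite {1}HP rootZ ?lead_coef_eq0 // root_prod_XsubC. Qed.

Lemma comb0 (w0 w1 : C) : (1 - 0)%:C * w0 + 0%:C * w1 = w0.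
Proof. by case: w0 => a b; case: w1 => c d /=; congr (_ +i* _); ring. Qed.
Lemma comb1 (w0 w1 : C) : (1 - 1)%:C * w0 + 1%:C * w1 = w1.
Proof. by case: w0 => a b; case: w1 => c d /=; congr (_ +i* _); ring. Qed.
Lemma combB (w0 w1 : C) (s t : R) :
  ((1 - s)%:C * w0 + s%:C * w1) - ((1 - t)%:C * w0 + t%:C * w1) = (s - t)%:C * (w1 - w0).
Proof. by case: w0 => a b; case: w1 => c d /=; congr (_ +i* _); ring. Qed.
Lemma combS (w0 w1 : C) (s e : R) :
  (1 - (s + e))%:C * w0 + (s + e)%:C * w1 = ((1 - s)%:C * w0 + s%:C * w1) + e%:C * (w1 - w0).
Proof. by case: w0 => a b; case: w1 => c d /=; congr (_ +i* _); ring. Qed.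
Lemma combE (w0 : C) (s : R) : (1 - s)%:C * w0 + s%:C * w0 = w0.
Proof. by case: w0 => a b /=; congr (_ +i* _); ring. Qed.

End Main.
Unset Implicit Arguments.
Theorem mainTheorem2 (R : realType) (p : {poly R[i]}) (B : set R[i]) :
  (2 <= (size p).-1)%N ->
  cclosed B -> cconvex B ->
  (forall z : R[i], root p^`() z -> B z) ->
  cconvex (CB p B).
Proof.
move=> hd Bcl Bcv Bcrit w0 w1 t Cw0 Cw1 t01 z hz.
case: (pselect (B z)) => // nBz; exfalso.
have sp : (2 < size p)%N by case: (size p) hd => [|[|[|]]].
have sp1 : (1 < size p)%N by apply: ltn_trans sp.
have [ww|wneq] := eqVneq w0 w1.
  by move: hz; rewrite -ww combE => /Cw0.
set wt := fun s : R => (1 - s)%:C * w0 + s%:C * w1.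
set rts := fun s : R => sval (closed_field_poly_normal (p - (wt s)%:P)).
have lcE : forall s, lead_coef (p - (wt s)%:P) = lead_coef p.
  move=> s; rewrite lead_coefDl // size_polyN.
  by apply: leq_ltn_trans sp1; exact: size_polyC_leq1.
have rtsP : forall s, p - (wt s)%:P = lead_coef p *: \prod_(x <- rts s) ('X - x%:P).
  by move=> s; rewrite -(lcE s); exact: svalP (closed_field_poly_normal _).
have pw0 : forall s, p - (wt s)%:P != 0.
  by move=> s; rewrite -size_poly_gt0 sizeB_const //; apply: ltn_trans sp1.
have rootE : forall s x, root (p - (wt s)%:P) x = (x \in rts s).
  by move=> s x; apply: factor_root; [exact: pw0 | rewrite (lcE s); exact: rtsP].
have srts : forall s, size (rts s) = (size p).-1.
  move=> s; have := sizeB_const (wt s) sp1.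
  by rewrite rtsP size_scale ?lead_coef_eq0 -?size_poly_gt0 ?size_prod_XsubC //; [move=> <- | apply: ltn_trans sp1].
have rtsn : forall s, rts s != [::].
  by move=> s; rewrite -size_eq0 srts; case: (size p) sp => [|[|n]].
have [cs Hcs] := closed_field_poly_normal (p^`())%R.
have p'0 : (p^`())%R != 0.
  by rewrite -size_poly_gt0; apply: ltn_trans (size_deriv_gt1 sp).
have critE : forall x, root (p^`())%R x = (x \in cs) by move=> x; exact: factor_root.
set F := rts 0 ++ rts 1 ++ cs.
have FB : forall f, f \in F -> B f.
  move=> f; rewrite !mem_cat => /orP[|/orP[]].
  - by rewrite -rootE /wt comb0; apply: Cw0.
  - by rewrite -rootE /wt comb1; apply: Cw1.
  - by rewrite -critE; apply: Bcrit.
have Fn : F != [::] by rewrite /F; case: (rts 0) (rtsn 0).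
have [v Hv] := separate Bcl Bcv FB Fn nBz.
have v0 : v != 0.
  apply/negP => /eqP v0.
  have [f fin] : exists f, f \in F by exists (nth 0 F 0); apply: mem_nth; rewrite lt0n size_eq0.
  by have := Hv f fin; rewrite v0 /ip /= !mul0r addr0 ltxx.
set M := fun s => lmax (ip v) (rts s).
have Mub : forall s x, root (p - (wt s)%:P) x -> ip v x <= M s.
  by move=> s x; rewrite rootE; exact: lmax_ub.
have Min : forall s, exists2 x, root (p - (wt s)%:P) x & M s = ip v x.
  by move=> s; have [x xin Hx] := lmax_in (ip v) (rtsn s); exists x; rewrite ?rootE.
set lp := nm (lead_coef p).
have lp0 : 0 < lp by rewrite lt_def nm_eq0 lead_coef_eq0 -size_poly_gt0 (ltn_trans _ sp1) // nm_ge0.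
set d := (size p).-1.
have Mle : forall s u r, 0 < r -> nm (wt s - wt u) < r ^+ d * lp -> M s <= M u + nm v * r.
  move=> s u r r0 H.
  have [x xr Mx] := Min s.
  have px : (p - (wt u)%:P).[x] = wt s - wt u.
    by move/rootP: xr; rewrite !hornerD !hornerN !hornerC => /eqP; rewrite subr_eq0 => /eqP ->.
  case: (boolP (has (fun y => nm (x - y) <= r) (rts u))) => [/hasP[y yin yc]|/hasPn Hn].
    rewrite Mx; have := Mub u y; rewrite rootE => /(_ yin) My.
    have : ip v x = ip v y + ip v (x - y) by rewrite ipB; ring.
    have := ip_le v (x - y); have := nm_ge0 v.
    move=> h1 h2 ->; have := ler_wpM2l h1 yc; lra.
  exfalso.
  have Hn' : forall y, y \in rts u -> r < nm (x - y) by move=> y /Hn; rewrite -ltNge.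
  have := @holder R (lead_coef p) (rts u) x r (ltW r0) Hn'.
  by rewrite -rtsP px srts -/d; apply/negP; rewrite -ltNge.
have Mcont : continuous M.
  apply: cont_eps => x eps e0.
  set r := eps / (nm v + 1).
  have r0 : 0 < r by apply: divr_gt0 => //; have := nm_ge0 v; lra.
  have nvr : nm v * r < eps.
    rewrite /r mulrA ltr_pdivrMr; last by have := nm_ge0 v; lra.
    by have := nm_ge0 v; nra.
  set c := nm (w1 - w0).
  have c0 : 0 <= c by exact: nm_ge0.
  have rd0 : 0 < r ^+ d * lp by apply: mulr_gt0 => //; exact: exprn_gt0.
  exists (r ^+ d * lp / (c + 1)); first by apply: divr_gt0 => //; lra.
  move=> y hy.
  have nw : forall a b, `|a - b| < r ^+ d * lp / (c + 1) -> nm (wt a - wt b) < r ^+ d * lp.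
    move=> a b hab; rewrite /wt combB nmM nmR -/c.
    move: hab; rewrite ltr_pdivlMr; last lra.
    have := normr_ge0 (a - b); nra.
  have h1 := Mle x y r r0 (nw x y hy).
  have hy' : `|y - x| < r ^+ d * lp / (c + 1) by rewrite distrC.
  have h2 := Mle y x r r0 (nw y x hy').
  apply/ltr_normlP; split; lra.
have [tm tmin tmmax] := @EVT_max R M 0 1 ler01 (continuous_subspaceT Mcont).
move: tmin; rewrite in_itv /= => /andP[tm0 tm1].
have Mt : M t <= M tm by apply: tmmax; rewrite in_itv /=.
have Lz : ip v z <= M t by exact: Mub t z hz.
have [zs zsroot Mzs] := Min tm.
have Lzs : ip v z <= ip v zs by rewrite -Mzs; lra.
have tmgt0 : 0 < tm.
  rewrite lt_def tm0 andbT; apply/negP => /eqP tmz.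
  have : zs \in F by rewrite mem_cat -rootE -tmz zsroot.
  by move/Hv; lra.
have tmlt1 : tm < 1.
  rewrite lt_def tm1 andbT; apply/negP => /eqP tmz.
  have : zs \in F by rewrite mem_cat orbC mem_cat -rootE tmz zsroot.
  by move/Hv; lra.
set q := v *: 'X + zs%:P.
set Q := p \Po q - (wt tm)%:P.
have qh : forall h, q.[h] = v * h + zs by move=> h; rewrite /q hornerD hornerZ hornerX hornerC.
have Qh : forall h, Q.[h] = p.[zs + v * h] - wt tm.
  by move=> h; rewrite /Q hornerD hornerN hornerC horner_comp qh (addrC (v * h)).
have pzs : p.[zs] = wt tm.
  by move/rootP: zsroot; rewrite hornerD hornerN hornerC => /eqP; rewrite subr_eq0 => /eqP.
have Q0 : Q`_0 = 0 by rewrite -horner_coef0 Qh mulr0 addr0 pzs subrr.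
have sq2 : size q = 2.
  have sX : size (v *: 'X) = 2 by rewrite size_scale // size_polyX.
  by rewrite /q size_polyDl sX // (leq_ltn_trans (size_polyC_leq1 _)).
have sQ : (2 < size Q)%N by rewrite /Q sizeB_const size_comp_poly2 //.
have dq : (q^`())%R = v%:P by rewrite /q derivD derivC addr0 derivZ derivX alg_polyC.
have HQ : forall r, root (Q^`())%R r -> complex.Re r < 0.
  move=> r; rewrite /Q derivB derivC subr0 deriv_comp dq /root hornerM hornerC horner_comp qh.
  rewrite mulf_eq0 (negPf v0) orbF addrC => /eqP hr.
  have : zs + v * r \in F by rewrite !mem_cat -critE /root hr eqxx !orbT.
  move/Hv; rewrite ip_shift => H.
  have := sq_gt0 v0; nra.
have c0 : w1 - w0 != 0 by rewrite subr_eq0 eq_sym.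
set delta := Num.min tm (1 - tm).
have delta0 : 0 < delta by rewrite lt_min tmgt0 /=; lra.
have [eps [rho [he [hQ hre]]]] := local Q0 sQ HQ c0 delta0.
have [h1 h2] : - delta < eps /\ eps < delta by case/ltr_normlP: he => *; split; lra.
have dtm : delta <= tm by rewrite /delta ge_min lexx.
have dtm' : delta <= 1 - tm by rewrite /delta ge_min lexx orbT.
have root' : root (p - (wt (tm + eps))%:P) (zs + v * rho).
  rewrite /root hornerD hornerN hornerC.
  have : p.[zs + v * rho] = Q.[rho] + wt tm by rewrite Qh subrK.
  by move=> ->; rewrite hQ /wt combS [X in X - _]addrC subrr.
have := Mub _ _ root'.
have := tmmax (tm + eps); rewrite in_itv /= => /(_ (introT andP (conj _ _))).
rewrite ip_shift -Mzs.
have := sq_gt0 v0.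
move=> sv0 Hm.
have Hm' := Hm (ltac:(lra)) (ltac:(lra)).
nra.
Qed.
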